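(* Let $G\subseteq\mathrm{GL}_n(\mathbb R)$ be a Zariski-closed subgroup that is closed under transposes and under non-zero scalar multiples, let $G_{\mathrm{SL}}=\{g\in G:\det g=1\}$, and let $Y\in(\mathbb R^n)^m$. If the MLE given $Y$ for the Gaussian group model $\mathcal M_G$ exists uniquely, then the stabilizer $(G_{\mathrm{SL}})_Y$ of $Y$ under the diagonal action is compact.
   Context: The Gaussian group model is $\mathcal M_G=\{g^{T}g:g\in G\}$, the centered Gaussians on $\mathbb R^n$ with these concentration matrices. For $Y=(Y_1,\dots,Y_m)$, the log-likelihood is $l_Y(\Psi)=\frac m2\log\det\Psi-\frac12\mathrm{Tr}(\Psi\sum_iY_iY_i^T)$ on $\mathcal M_G$, and an MLE is a maximizer of $l_Y$ on $\mathcal M_G$. $G_{\mathrm{SL}}$ acts diagonally: $g\cdot Y=(gY_1,\dots,gY_m)$, and $(G_{\mathrm{SL}})_Y=\{g\in G_{\mathrm{SL}}: g\cdot Y=Y\}$, with the subspace topology from $\mathrm{GL}_n(\mathbb R)$. *)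

(* Defs.v *)
From HB Require Import structures.
From mathcomp Require Import all_boot all_order all_algebra.
From mathcomp Require Import all_classical all_reals all_analysis.
Set Implicit Arguments. Unset Strict Implicit. Unset Printing Implicit Defensive.
Import Order.TTheory GRing.Theory Num.Theory.
Import numFieldNormedType.Exports.
Local Open Scope ring_scope.
Local Open Scope classical_set_scope.

Inductive is_poly_fun (R : realType) (n : nat) : ('M[R]_n -> R) -> Prop :=
| pf_const (c : R) : is_poly_fun (fun _ => c)
| pf_coord (i j : 'I_n) : is_poly_fun (fun A => A i j)
| pf_add f g : is_poly_fun f -> is_poly_fun g -> is_poly_fun (fun A => f A + g A)
| pf_mul f g : is_poly_fun f -> is_poly_fun g -> is_poly_fun (fun A => f A * g A).

Definition is_GL_subgroup (R : realType) (n : nat) (G : set 'M[R]_n) : Prop :=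
  (forall g, G g -> g \in unitmx) /\
  G 1%:M /\
  (forall g h, G g -> G h -> G (g *m h)) /\
  (forall g, G g -> G (invmx g)).

Definition zariski_closed_in_GL (R : realType) (n : nat) (G : set 'M[R]_n) : Prop :=
  exists F : set ('M[R]_n -> R),
    (forall f, F f -> is_poly_fun f) /\
    G = [set A | A \in unitmx /\ forall f, F f -> f A = 0].

Definition G_SL (R : realType) (n : nat) (G : set 'M[R]_n) : set 'M[R]_n :=
  [set g | G g /\ \det g = 1].

Definition gauss_group_model (R : realType) (n : nat) (G : set 'M[R]_n) : set 'M[R]_n :=
  [set Psi | exists2 g, G g & Psi = g^T *m g].

Definition scatter (R : realType) (n m : nat) (Y : 'I_m -> 'cV[R]_n) : 'M[R]_n :=
  \sum_(i < m) (Y i *m (Y i)^T).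

Definition loglik (R : realType) (n m : nat) (Y : 'I_m -> 'cV[R]_n) (Psi : 'M[R]_n) : R :=
  (m%:R / 2) * ln (\det Psi) - (1 / 2) * \tr (Psi *m scatter Y).

Definition is_MLE (R : realType) (n m : nat) (G : set 'M[R]_n)
    (Y : 'I_m -> 'cV[R]_n) (Psi : 'M[R]_n) : Prop :=
  gauss_group_model G Psi /\
  forall Psi', gauss_group_model G Psi' -> loglik Y Psi' <= loglik Y Psi.

Definition MLE_exists_uniquely (R : realType) (n m : nat) (G : set 'M[R]_n)
    (Y : 'I_m -> 'cV[R]_n) : Prop :=
  exists Psi, is_MLE G Y Psi /\ forall Psi', is_MLE G Y Psi' -> Psi' = Psi.

Definition stabilizer (R : realType) (n m : nat) (H : set 'M[R]_n)
    (Y : 'I_m -> 'cV[R]_n) : set 'M[R]_n :=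
  [set g | H g /\ forall i, g *m Y i = Y i].

(* Main.v *)
Require Import Defs.
From HB Require Import structures.
From mathcomp Require Import all_boot all_order all_algebra.
From mathcomp Require Import all_classical all_reals all_analysis.
Import Order.TTheory GRing.Theory Num.Theory.
Import numFieldNormedType.Exports.
Local Open Scope ring_scope.
Local Open Scope classical_set_scope.
From mathcomp Require Import ring lra.

Lemma poly_cont (R : realType) n (f : 'M[R]_n -> R) : is_poly_fun f -> continuous f.
Proof.
elim=> [c|i j|f1 g1 _ IH1 _ IH2|f1 g1 _ IH1 _ IH2].
- exact: cst_continuous.
- exact: coord_continuous.
- exact: (fun x => continuousD (IH1 x) (IH2 x)).
- exact: (fun x => continuousM (IH1 x) (IH2 x)).
Qed.

Lemma poly_sum (R : realType) n (I : Type) (r : seq I) (P : pred I)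
  (F : I -> 'M[R]_n -> R) : (forall i, is_poly_fun (F i)) ->
  is_poly_fun (fun A => \sum_(i <- r | P i) F i A).
Proof.
move=> HF; elim: r => [|a r IH].
  have -> : (fun A : 'M[R]_n => \sum_(i <- [::] | P i) F i A) = fun _ => 0.
    by apply: funext => A; rewrite big_nil.
  exact: pf_const.
case Pa: (P a).
  have -> : (fun A : 'M[R]_n => \sum_(i <- a :: r | P i) F i A) =
     fun A => F a A + \sum_(i <- r | P i) F i A.
    by apply: funext => A; rewrite big_cons Pa.
  exact: pf_add.
have -> : (fun A : 'M[R]_n => \sum_(i <- a :: r | P i) F i A) =
     fun A => \sum_(i <- r | P i) F i A.
  by apply: funext => A; rewrite big_cons Pa.
exact: IH.
Qed.

Lemma poly_prod (R : realType) n (I : Type) (r : seq I) (P : pred I)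
  (F : I -> 'M[R]_n -> R) : (forall i, is_poly_fun (F i)) ->
  is_poly_fun (fun A => \prod_(i <- r | P i) F i A).
Proof.
move=> HF; elim: r => [|a r IH].
  have -> : (fun A : 'M[R]_n => \prod_(i <- [::] | P i) F i A) = fun _ => 1.
    by apply: funext => A; rewrite big_nil.
  exact: pf_const.
case Pa: (P a).
  have -> : (fun A : 'M[R]_n => \prod_(i <- a :: r | P i) F i A) =
     fun A => F a A * \prod_(i <- r | P i) F i A.
    by apply: funext => A; rewrite big_cons Pa.
  exact: pf_mul.
have -> : (fun A : 'M[R]_n => \prod_(i <- a :: r | P i) F i A) =
     fun A => \prod_(i <- r | P i) F i A.
  by apply: funext => A; rewrite big_cons Pa.
exact: IH.
Qed.

Lemma poly_det (R : realType) n : is_poly_fun (fun A : 'M[R]_n => \det A).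
Proof.
apply: poly_sum => s; apply: pf_mul; first exact: pf_const.
by apply: poly_prod => i; apply: pf_coord.
Qed.

Lemma poly_closed (R : realType) n (f : 'M[R]_n -> R) c :
  is_poly_fun f -> closed [set A | f A = c].
Proof.
move=> pf; have := preimage_closed (f := f) (D := [set x | x = c]).
apply; last exact: closed_eq.
by move=> x _; apply: poly_cont.
Qed.

Lemma vec_mx_cont (R : realType) n :
  continuous (fun v : 'rV[R]_(n * n) => (vec_mx v : 'M[R]_(n, n))).
Proof.
move=> v s /= /nbhs_ballP [e e0 es].
apply/nbhs_ballP; exists e => //= w vw; apply: es.
move: vw; rewrite /ball /=.
rewrite /mx_ball => -[_ vw]; split => // i j.
by rewrite !mxE; apply: vw.
Qed.
Lemma box_compact (R : realType) n (C : R) :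
  compact [set A : 'M[R]_n | forall i j, `|A i j| <= C].
Proof.
set B := [set v : 'rV[R]_(n * n) | forall k, `[-C, C]%classic (v ord0 k)].
have cB : compact B.
  by apply: (@rV_compact _ _ (fun=> `[-C, C]%classic)) => _; apply: segment_compact.
have := continuous_compact (continuous_subspaceT (@vec_mx_cont R n)) cB.
have -> : [set A : 'M[R]_n | forall i j, `|A i j| <= C] = (fun v => vec_mx v) @` B.
  apply/seteqP; split => A.
    move=> HA; exists (mxvec A); last by rewrite mxvecK.
    move=> k; case/mxvec_indexP: k => i j; rewrite mxvecE /= in_itv /=.
    by rewrite -ler_norml.
  case=> v Bv <- i j; rewrite mxE; have := Bv (mxvec_index i j).
  by rewrite /= in_itv /= -ler_norml.
by [].
Qed.
Lemma le_sum1 {R : realType} {n} (F : 'I_n -> R) k :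
  (forall i, 0 <= F i) -> F k <= \sum_i F i.
Proof. by move=> H; rewrite (bigD1 k) //= lerDl sumr_ge0. Qed.

Lemma scatter_inv (R : realType) n m (Y : 'I_m -> 'cV[R]_n) g :
  (forall i, g *m Y i = Y i) -> g *m scatter Y *m g^T = scatter Y.
Proof.
move=> HY; rewrite /scatter mulmx_sumr mulmx_suml; apply: eq_bigr => i _.
by rewrite mulmxA -mulmxA -trmx_mul HY.
Qed.

Lemma tr_inv (R : comRingType) n (P S g : 'M[R]_n) :
  g *m S *m g^T = S -> \tr (g^T *m P *m g *m S) = \tr (P *m S).
Proof.
move=> HS.
have -> : g^T *m P *m g *m S = g^T *m (P *m g *m S) by rewrite !mulmxA.
rewrite mxtrace_mulC.
have -> : P *m g *m S *m g^T = P *m (g *m S *m g^T) by rewrite !mulmxA.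
by rewrite HS.
Qed.

Lemma col_bound (R : realType) n (K : 'M[R]_n) k j :
  `|K k j| <= 1 + (K^T *m K) j j.
Proof.
have H : `|K k j| <= 1 + K k j * K k j.
  rewrite ler_norml; apply/andP; split; nra.
apply: le_trans H _; rewrite lerD2l mxE.
rewrite (eq_bigr (fun l => K l j * K l j)); last by move=> l _; rewrite mxE.
by apply: (le_sum1 (fun l => K l j * K l j)) => l; rewrite -expr2 sqr_ge0.
Qed.

Lemma prod_bound (R : realType) n (A K : 'M[R]_n) b i j :
  (forall k, `|K k j| <= b) -> `|(A *m K) i j| <= \sum_k `|A i k| * b.
Proof.
move=> Hb; rewrite mxE; apply: le_trans (ler_norm_sum _ _ _) _.
by apply: ler_sum => k _; rewrite normrM ler_wpM2l.
Qed.

Theorem corollary2p4 (R : realType) (n m : nat) (G : set 'M[R]_n)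
    (Y : 'I_m -> 'cV[R]_n) :
  is_GL_subgroup G ->
  zariski_closed_in_GL G ->
  (forall g, G g -> G g^T) ->
  (forall (c : R) g, c != 0 -> G g -> G (c *: g)) ->
  MLE_exists_uniquely G Y ->
  compact (stabilizer (G_SL G) Y).
Proof.
move=> [Gunit [G1 [GM GV]]] [F [HF GE]] _ _ [Psi [[[h Gh ->] Hmax] Huniq]].
have hU := Gunit _ Gh.
have key : forall g, stabilizer (G_SL G) Y g -> g^T *m (h^T *m h) *m g = h^T *m h.
  move=> g [[Gg detg] gY]; apply: Huniq; split.
    exists (h *m g); first exact: GM.
    by rewrite trmx_mul !mulmxA.
  move=> Psi' HPsi'; apply: le_trans (Hmax _ HPsi') _.
  rewrite le_eqVlt; apply/orP; left; apply/eqP.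
  rewrite /loglik !det_mulmx !det_tr detg mul1r mulr1; congr (_ - _ * _).
  - by rewrite mul1r.
  - by rewrite tr_inv // scatter_inv.
set P := h^T *m h.
have Pjj : forall j, P j j = \sum_l h l j * h l j.
  by move=> j; rewrite /P mxE; apply: eq_bigr => l _; rewrite mxE.
have Pge0 : forall j, 0 <= P j j.
  by move=> j; rewrite Pjj sumr_ge0 // => l _; rewrite -expr2 sqr_ge0.
pose hi := invmx h.
pose B := fun i j => (\sum_k `|hi i k|) * (1 + P j j).
have Bge0 : forall i j, 0 <= B i j.
  move=> i j; apply: mulr_ge0; first by apply: sumr_ge0 => k _; exact: normr_ge0.
  by rewrite addr_ge0 // Pge0.
pose C := \sum_i \sum_j B i j.
have bound : forall g, stabilizer (G_SL G) Y g -> forall i j, `|g i j| <= C.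
  move=> g Sg i j.
  have K := key g Sg.
  have KK : (h *m g)^T *m (h *m g) = P by rewrite -[RHS]K trmx_mul !mulmxA.
  have -> : g = hi *m (h *m g) by rewrite /hi mulKmx.
  apply: le_trans (@prod_bound R n hi (h *m g) (1 + P j j) i j _) _.
    by move=> k; rewrite -KK col_bound.
  rewrite -mulr_suml; apply: (le_trans (le_sum1 (fun j => B i j) j (Bge0 i))).
  apply: (le_sum1 (fun i => \sum_j B i j) i) => i'.
  by apply: sumr_ge0 => j' _; apply: Bge0.
have SE : stabilizer (G_SL G) Y = [set A | forall f, F f -> f A = 0] `&`
   ([set A | \det A = 1] `&` [set A | forall i k, (A *m Y i) k 0 = Y i k 0]).
  apply/seteqP; split=> A.
    move=> [[GA dA] AY]; move: GA; rewrite GE => -[_ HA].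
    by split; [exact: HA | split; [exact: dA | move=> i k; rewrite AY]].
  move=> [HA [dA AY]]; split; [split|].
  - by rewrite GE; split; [rewrite unitmxE dA unitr1 | exact: HA].
  - exact: dA.
  - by move=> i; apply/matrixP => k l; rewrite (ord1 l); apply: AY.
apply: (subclosed_compact _ (@box_compact R n C)); last first.
  by move=> A SA; apply: bound.
rewrite SE; apply: closedI.
  have -> : [set A : 'M[R]_n | forall f, F f -> f A = 0] =
     \bigcap_(f in F) [set A : 'M[R]_n | f A = 0] by [].
  by apply: closed_bigI => f Ff; apply: poly_closed; apply: HF.
apply: closedI; first by apply: poly_closed; apply: poly_det.
have -> : [set A : 'M[R]_n | forall i k, (A *m Y i) k 0 = Y i k 0] =
   \bigcap_(i in setT) \bigcap_(k in setT) [set A : 'M[R]_n | (A *m Y i) k 0 = Y i k 0].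
  by apply/seteqP; split => A /= H i; [move=> _ k _ | move=> k]; apply: H.
apply: closed_bigI => i _.
apply: closed_bigI => k _; apply: poly_closed.
have -> : (fun A : 'M[R]_n => (A *m Y i) k 0) = fun A => \sum_l A k l * Y i l 0.
  by apply: funext => A; rewrite mxE.
by apply: poly_sum => l; apply: pf_mul; [apply: pf_coord | apply: pf_const].
Qed.
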